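(* Let $V$ be a positive dimensional real normed vector space and $\varphi:V\to V$ an invertible linear map. Let $C\subseteq V$ be a convex cone with $\varphi(C)=C$. Suppose all eigenvalues of $\varphi$ are of modulus greater than $1$. Then $(\varphi-\operatorname{id}_V)^{-1}(C)\subseteq C$.
   Context: $(\varphi-\operatorname{id}_V)^{-1}(C)$ denotes the preimage of $C$ under the linear map $\varphi-\operatorname{id}_V$. *)

(* Defs.v *)
From HB Require Import structures.
From mathcomp Require Import all_boot all_order all_algebra.
From mathcomp Require Import complex.
From mathcomp Require Import reals.
Set Implicit Arguments. Unset Strict Implicit. Unset Printing Implicit Defensive.
Import Order.TTheory GRing.Theory Num.Theory.
Local Open Scope ring_scope.

Definition convex_cone (R : realType) (n : nat) (C : 'rV[R]_n -> Prop) : Prop :=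
  forall (a b : R) (x y : 'rV[R]_n), 0 <= a -> 0 <= b -> C x -> C y ->
    C (a *: x + b *: y).

Definition complex_eigenvalue (R : realType) (n : nat) (A : 'M[R]_n)
    (z : R[i]) : Prop :=
  root (map_poly (fun r : R => (r%:C)%C) (char_poly A)) z.

(* Main.v *)
Require Import Defs.
From HB Require Import structures.
From mathcomp Require Import all_boot all_order all_algebra.
From mathcomp Require Import complex.
From mathcomp Require Import reals.
From mathcomp Require Import ring lra.
Set Implicit Arguments. Unset Strict Implicit. Unset Printing Implicit Defensive.
Import Order.TTheory GRing.Theory Num.Theory.
Local Open Scope ring_scope.
Lemma bernoulli (R : realFieldType) (d : R) (k : nat) : 0 <= d -> 1 + k%:R * d <= (1 + d) ^+ k.
Proof.
move=> hd; elim: k => [|k IH]; first by rewrite expr0 mul0r addr0.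
rewrite exprS -natr1.
have h0 : 0 <= k%:R * d by apply: mulr_ge0.
have h1 : 1 + (k%:R * d) <= (1 + d) ^+ k := IH.
have h2 := ler_wpM2l (_ : 0 <= 1 + d) h1.
rewrite mulrDl mul1r.
have h3 : 0 <= d * (k%:R * d) by apply: mulr_ge0.
move: h0 h1 h2 h3; set X := (1 + d) ^+ k; set Y := k%:R * d => h0 h1 h2 h3.
have h4 : (1 + d) * (1 + Y) = 1 + Y + d + d * Y by ring.
rewrite h4 in h2; lra.
Qed.

Lemma geom (R : realType) (c K eta : R) : 0 <= c -> c < 1 -> 0 < eta ->
  exists k : nat, c ^+ k * K < eta.
Proof.
move=> c0 c1 e0.
have [K0|K0] := lerP K 0.
  by exists 0%N; rewrite expr0 mul1r; apply: le_lt_trans K0 e0.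
have [->|cn0] := eqVneq c 0.
  by exists 1%N; rewrite expr1 mul0r.
have cp : 0 < c by rewrite lt_def cn0.
set d := c^-1 - 1.
have dp : 0 < d by rewrite /d subr_gt0 invf_gt1.
have cE : c = (1 + d)^-1 by rewrite /d addrC subrK invrK.
have q0 : 0 <= K / (eta * d) by apply: divr_ge0; [apply: ltW | apply: ltW; apply: mulr_gt0].
have hk := archi_boundP q0.
set k := Num.bound _ in hk.
exists k.
have pk : 0 < (1 + d) ^+ k by apply: exprn_gt0; lra.
rewrite cE exprVn.
rewrite mulrC ltr_pdivrMr //.
have hb := bernoulli k (ltW dp).
have hK : K < k%:R * (eta * d).
  by rewrite -ltr_pdivrMr //; apply: mulr_gt0.
have : eta * (1 + k%:R * d) <= eta * (1 + d) ^+ k by rewrite ler_pM2l.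
move: hb hK; set kk := k%:R; set X := (1 + d) ^+ k => hb hK hE.
have e1 : eta * (1 + kk * d) = eta + kk * (eta * d) by ring.
rewrite e1 in hE; lra.
Qed.
Import Normc.

Lemma normc_ge0 (R : rcfType) (z : R[i]) : 0 <= normc z.
Proof. by case: z => a b; rewrite /normc sqrtr_ge0. Qed.

Lemma norm_normc (R : rcfType) (z : R[i]) : `|z| = ((normc z)%:C)%C.
Proof. by []. Qed.

Definition ev (P : nat -> Prop) := exists M, forall N, (M <= N)%N -> P N.

Lemma step_lemma (R : realType) (l : R[i]) (u w : nat -> R[i]) :
 normc l < 1 -> (forall N, u N.+1 = l * u N + w N) ->
 (forall e : R, 0 < e -> ev (fun N => normc (w N) < e)) ->
 forall e : R, 0 < e -> ev (fun N => normc (u N) < e).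
Proof.
move=> hl hu hw e e0.
set c := normc l.
have c0 : 0 <= c := normc_ge0 l.
have hc1 : c < 1 := hl.
have [M hM] : ev (fun N => normc (w N) < e * (1 - c) / 2).
  apply: hw; apply: divr_gt0 => //; apply: mulr_gt0 => //; lra.
have rec N : (M <= N)%N -> normc (u N.+1) - e/2 <= c * (normc (u N) - e/2).
  move=> hN; rewrite hu.
  have h1 := le_normcD (l * u N) (w N).
  rewrite normcM -/c in h1.
  have h2 := hM N hN.
  move: h1 h2; set a := normc (u N); set b := normc (w N); set s := normc _ => h1 h2.
  have E1 : c * (a - e/2) = c * a - c * e / 2 by ring.
  have E2 : e * (1 - c) / 2 = e / 2 - c * e / 2 by ring.
  rewrite E1; rewrite E2 in h2; lra.
set K := `| normc (u M) - e / 2 |.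
have iter k : normc (u (M + k)%N) - e/2 <= c ^+ k * K.
  elim: k => [|k IH]; first by rewrite addn0 expr0 mul1r ler_norm.
  rewrite addnS; apply: le_trans (rec _ (leq_addr _ _)) _.
  by rewrite exprS -mulrA ler_wpM2l.
have e2 : 0 < e / 2 by lra.
have [k0 hk0] := geom K c0 hc1 e2.
exists (M + k0)%N => N hN.
have hMN : (M <= N)%N by apply: leq_trans hN; apply: leq_addr.
have := iter (N - M)%N; rewrite subnKC //.
have : c ^+ (N - M) * K <= c ^+ k0 * K.
  apply: ler_wpM2r; first by apply: normr_ge0.
  by apply: ler_wiXn2l => //; [apply: ltW | rewrite leq_subRL].
lra.
Qed.

Definition act (F : nzRingType) (p : {poly F}) (u : nat -> F) (N : nat) : F :=
  \sum_(i < size p) p`_i * u (N + i)%N.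

Lemma act_widen (F : nzRingType) (p : {poly F}) u N K : (size p <= K)%N ->
  act p u N = \sum_(i < K) p`_i * u (N + i)%N.
Proof.
move=> hK; rewrite /act.
rewrite -!(big_mkord xpredT (fun i => p`_i * u (N + i)%N)).
rewrite [RHS](big_cat_nat (leq0n _) hK) /= [X in _ = _ + X]big_nat_cond [X in _ = _ + X]big1 ?addr0 //.
by move=> i /andP[/andP[hi _] _]; rewrite nth_default // mul0r.
Qed.

Lemma act_mulXsub (F : comNzRingType) (q : {poly F}) l u N :
  act (q * ('X - l%:P)) u N = act q (fun N => u N.+1 - l * u N) N.
Proof.
have hs : (size (q * ('X - l%:P))%R <= (size q).+1)%N.
  apply: leq_trans (size_polyMleq _ _) _; rewrite size_XsubC addn2 //.
rewrite (act_widen _ _ hs) /act.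
under eq_bigr do rewrite mulrBr coefB coefMX coefMC mulrBl.
rewrite sumrB big_ord_recl big_ord_recr /= mul0r add0r.
rewrite [q`_(size q)]nth_default // !mul0r addr0 -sumrB.
apply: eq_bigr => i _.
by rewrite /bump /= add1n addnS mulrBr mulrA [q`_i * l]mulrC.
Qed.

Lemma rec_lemma (R : realType) (k : nat) : forall (p : {poly R[i]}) (u : nat -> R[i]),
  size p = k.+1 -> (forall z, root p z -> normc z < 1) ->
  (forall N, act p u N = 0) -> forall e : R, 0 < e -> ev (fun N => normc (u N) < e).
Proof.
elim: k => [|k IH] p u hs hr ha e e0.
  have p0 : p`_0 != 0.
    have : lead_coef p != 0 by rewrite lead_coef_eq0 -size_poly_eq0 hs.
    by rewrite lead_coefE hs.
  exists 0%N => N _.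
  have := ha N; rewrite /act hs big_ord1 addn0 => /eqP; rewrite mulf_eq0 (negbTE p0) /= => /eqP ->.
  by rewrite normc0.
have [l hl] : exists l, root p l by apply/closed_rootP; rewrite hs.
have [q hq] := factor_theorem _ _ hl.
have q0 : q != 0 by apply/eqP => q0; move: hs; rewrite hq q0 mul0r size_poly0.
have hsq : size q = k.+1.
  move: hs; rewrite hq size_mul // ?size_XsubC ?polyXsubC_eq0 //.
  by rewrite addn2 /= => -[].
apply: (@step_lemma R l u (fun N => u N.+1 - l * u N)).
- exact: hr.
- by move=> N; rewrite addrC subrK.
- apply: (IH q) => //.
    by move=> z hz; apply: hr; rewrite hq rootM hz.
  by move=> N; rewrite -act_mulXsub -hq.
- exact: e0.
Qed.

Lemma ev_mono (P Q : nat -> Prop) : ev P -> (forall N, P N -> Q N) -> ev Q.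
Proof. by move=> [M hM] hPQ; exists M => N hN; apply: hPQ; apply: hM. Qed.

Lemma ev_all n (P : 'I_n -> nat -> Prop) : (forall j, ev (P j)) ->
  ev (fun N => forall j, P j N).
Proof.
move=> hP.
suff : forall k, ev (fun N => forall j : 'I_n, (j < k)%N -> P j N).
  move=> /(_ n) h; apply: (ev_mono h) => N h2 j; exact: h2.
elim=> [|k [M hM]]; first by exists 0%N.
have [kn|kn] := ltnP k n.
  have [M2 hM2] := hP (Ordinal kn).
  exists (maxn M M2) => N; rewrite geq_max => /andP[h1 h2] j hj.
  rewrite ltnS leq_eqVlt in hj; case/orP: hj => [/eqP hj|hj]; last exact: hM.
  have -> : j = Ordinal kn by apply: val_inj.
  exact: hM2.
exists M => N hN j hj; apply: hM => //.
by apply: leq_trans (ltn_ord j) kn.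
Qed.

Lemma sum_widen (V : zmodType) (f : nat -> V) a K : (a <= K)%N ->
  (forall i, (a <= i)%N -> f i = 0) -> \sum_(i < a) f i = \sum_(i < K) f i.
Proof.
move=> hK h0.
rewrite -!(big_mkord xpredT f).
rewrite [RHS](big_cat_nat (leq0n _) hK) /= [X in _ = _ + X]big_nat_cond [X in _ = _ + X]big1 ?addr0 //.
by move=> i /andP[/andP[hi _] _]; apply: h0.
Qed.

Lemma cone_sum (R : realType) n (C : 'rV[R]_n -> Prop) (y : 'rV[R]_n) N
  (c : nat -> R) (v : nat -> 'rV[R]_n) :
  convex_cone C -> C y -> (forall i, (i < N)%N -> 0 <= c i) -> (forall i, C (v i)) ->
  C (\sum_(i < N) c i *: v i).
Proof.
move=> hC hy hc hv.
elim: N hc => [|N IH] hc.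
  by rewrite big_ord0; have := hC 0 0 y y (lexx _) (lexx _) hy hy; rewrite !scale0r addr0.
rewrite big_ord_recr /=.
have := hC 1 (c N) _ _ ler01 (hc N (ltnSn _)) (IH (fun i hi => hc i (ltnW hi))) (hv N).
by rewrite scale1r.
Qed.

Lemma normc_real (R : rcfType) (r : R) : normc (r%:C)%C = `|r|.
Proof. by rewrite /normc /= expr0n addr0 sqrtr_sqr. Qed.

Theorem proposition3p2 (R : realType) (n : nat) (A : 'M[R]_n)
  (C : 'rV[R]_n -> Prop)
  (hn : (0 < n)%N)
  (hA : A \in unitmx)
  (hC : convex_cone C)
  (hinv : forall y : 'rV[R]_n, C y <-> exists x, C x /\ x *m A = y)
  (heig : forall z : R[i], complex_eigenvalue A z -> 1 < `|z|) :
  forall x : 'rV[R]_n, C (x *m A - x) -> C x.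
Proof.
move=> x hy.
case: n hn A C hA hC hinv heig x hy => // m _ A C hA hC hinv heig x hy.
set y := x *m A - x in hy.
set B := invmx A.
have hAB : A * B = 1 by rewrite -mulmxE mulmxV.
have hBA : B * A = 1 by rewrite -mulmxE mulVmx.
have CB z : C z -> C (z *m B).
  move=> /hinv [w [Cw hw]]; suff -> : z *m B = w by [].
  by rewrite -hw -mulmxA mulmxE hAB mulmx1.
set chi := char_poly B.
set f := real_complex R.
have hroots : forall z, root (map_poly f chi) z -> normc z < 1.
  move=> z; rewrite /chi map_char_poly -eigenvalue_root_char => /eigenvalueP [v hv v0].
  have hBAc : map_mx f B *m map_mx f A = 1%:M by rewrite -map_mxM mulmxE hBA map_mx1.
  have e1 : v = z *: (v *m map_mx f A) by rewrite scalemxAl -hv -mulmxA hBAc mulmx1.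
  have z0 : z != 0.
    by apply/eqP => z0; move: e1; rewrite z0 scale0r; apply/eqP.
  have hvA : v *m map_mx f A = z^-1 *: v by rewrite {2}e1 scalerA mulVf // scale1r.
  have : eigenvalue (map_mx f A) z^-1 by apply/eigenvalueP; exists v.
  rewrite eigenvalue_root_char -map_char_poly => hr.
  have := heig z^-1 hr.
  rewrite normfV invf_gt1 ?normr_gt0 // norm_normc => h.
  by rewrite -(ltcR (normc z) 1).
have cop : coprimep chi ('X - 1%:P).
  rewrite coprimep_XsubC; apply/negP => r1.
  by have := hroots _ (rmorph_root f r1); rewrite rmorph1 normc1 ltxx.
case/Bezout_eq1_coprimepP: cop => [[u1 u2]] /= hbez.
have hCH : horner_mx B chi = 0 by apply: Cayley_Hamilton.
set H := horner_mx B (- u2).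
have hH : (1 - B) * H = 1.
  apply: mulmx1C; rewrite mulmxE /H rmorphN mulNr -mulrN opprB.
  have := congr1 (horner_mx B) hbez; rewrite rmorphD !rmorphM /= hCH mulr0 add0r rmorph1.
  by rewrite rmorphB /= horner_mx_X horner_mx_C.
set e := fun N : nat => ('X^N * - u2) %% chi.
have he N : horner_mx B (e N) = B ^+ N * H.
  have := divp_eq ('X^N * - u2) chi; move/(congr1 (horner_mx B)).
  rewrite rmorphD !rmorphM /= hCH mulr0 add0r => <-.
  by rewrite rmorphXn /= horner_mx_X.
have chi0 : chi != 0 by rewrite -size_poly_eq0 size_char_poly.
have hsize N : (size (e N) <= m.+1)%N.
  by rewrite -ltnS -(size_char_poly B) ltn_modp.
have hrec j N : act (map_poly f chi) (fun N => f (e N)`_j) N = 0.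
  rewrite /act size_map_poly.
  under eq_bigr do rewrite coef_map -rmorphM.
  rewrite -rmorph_sum.
  suff -> : \sum_(i < size chi) chi`_i * (e (N + i)%N)`_j = 0 by rewrite rmorph0.
  have -> : \sum_(i < size chi) chi`_i * (e (N + i)%N)`_j
      = (\sum_(i < size chi) chi`_i *: e (N + i)%N)`_j.
    by rewrite coef_sum; apply: eq_bigr => i _; rewrite coefZ.
  have -> : \sum_(i < size chi) chi`_i *: e (N + i)%N
      = (\sum_(i < size chi) chi`_i *: ('X^(N + i) * - u2)) %% chi.
    rewrite (big_morph (fun p => p %% chi) (modpD chi) (mod0p chi)).
    by apply: eq_bigr => i _; rewrite modpZl.
  have -> : \sum_(i < size chi) chi`_i *: ('X^(N + i) * - u2) = ('X^N * - u2) * chi.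
    have chiE : chi = \sum_(i < size chi) chi`_i *: 'X^i by rewrite -poly_def coefK.
    rewrite [in RHS]chiE mulr_sumr; apply: eq_bigr => i _.
    by rewrite exprD -scalerAr mulrAC.
  by rewrite modp_mull coef0.
have hev : ev (fun N => forall j : 'I_m.+1, normc (f (e N)`_j) < 1).
  apply: ev_all => j.
  apply: (@rec_lemma R m.+1 (map_poly f chi)) => //.
  by rewrite size_map_poly size_char_poly.
case: hev => N0 hN0.
set N := (N0 + m.+1)%N.
set Q := \sum_(k < N) (1 + (e N)`_k) *: B ^+ k.+1.
have hE : horner_mx B (e N) = \sum_(k < N) (e N)`_k *: B ^+ k.
  have eE : e N = \sum_(k < size (e N)) (e N)`_k *: 'X^k by rewrite -poly_def coefK.
  rewrite [in LHS]eE raddf_sum /=.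
  transitivity (\sum_(k < size (e N)) (e N)`_k *: B ^+ k).
    by apply: eq_bigr => k _; rewrite linearZ /= rmorphXn /= horner_mx_X.
  apply: (@sum_widen _ (fun k => (e N)`_k *: B ^+ k)).
  - by apply: leq_trans (hsize N) _; rewrite /N leq_addl.
  - by move=> k hk; rewrite nth_default // scale0r.
have hQE : Q = B * (\sum_(k < N) B ^+ k + B ^+ N * H).
  rewrite /Q -he hE mulrDr !mulr_sumr -big_split; apply: eq_bigr => k _.
  by rewrite scalerDl scale1r exprS -scalerAr.
have comm1 : (1 - B) * B = B * (1 - B) by rewrite mulrBl mulrBr mul1r mulr1.
have commN : (1 - B) * B ^+ N = B ^+ N * (1 - B) by apply: commrX.
have hS : (1 - B) * \sum_(k < N) B ^+ k = 1 - B ^+ N.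
  by rewrite -opprB mulNr -subrX1 opprB.
have hQ : (A - 1) * Q = 1.
  have -> : A - 1 = A * (1 - B) by rewrite mulrBr hAB mulr1.
  rewrite hQE.
  have -> : A * (1 - B) * (B * (\sum_(k < N) B ^+ k + B ^+ N * H))
     = (A * B) * ((1 - B) * (\sum_(k < N) B ^+ k + B ^+ N * H)).
    by rewrite -!mulrA; congr (_ * _); rewrite !mulrA comm1.
  rewrite hAB mul1r mulrDr hS mulrA commN -mulrA hH mulr1 subrK //.
have xE : x = y *m Q.
  have -> : y = x *m (A - 1) by rewrite /y mulmxBr mulmx1.
  rewrite -mulmxA; have -> : (A - 1) *m Q = 1%:M by exact: hQ.
  by rewrite mulmx1.
have CBk k : C (y *m B ^+ k).
  elim: k => [|k IH]; first by rewrite expr0 mulmx1.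
  rewrite exprSr; have -> : B ^+ k * B = B ^+ k *m B by [].
  by rewrite mulmxA; apply: CB.
rewrite xE /Q mulmx_sumr.
under eq_bigr do rewrite -scalemxAr.
apply: (@cone_sum R m.+1 C y N (fun k => 1 + (e N)`_k) (fun k => y *m B ^+ k.+1)) => //.
move=> k hk.
have [km|km] := ltnP k m.+1.
  have := hN0 N (leq_addr _ _) (Ordinal km); rewrite normc_real /= ltr_norml => /andP[h1 _].
  by move: h1; set t := (e N)`_k; lra.
by rewrite nth_default ?addr0 //; apply: leq_trans (hsize N) km.
Qed.
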